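(* Assume $\|X\|/p\le\lambda\le4\|X\|\sqrt{\log p}$. For $p$ sufficiently large and any $\beta^*\in\mathbb R^p$ with support $S_*$ and $s_*=|S_*|$, almost surely \[ \int\Lambda_{n,\beta,\beta^*}(Y)\,d\Pi(\beta)\ge\frac{\pi_p(s_* )}{p^{2s_*}}e^{-\lambda\|\beta^*\|_1}e^{-1}. \]
   Context: $X$ is a deterministic real $n\times p$ matrix, $\|X\|=\max_i\|X_{\cdot,i}\|_2$ (max column norm), $Y\in\mathbb R^n$ the observation. $\Lambda_{n,\beta,\beta^*}(Y)=\exp\big(-\frac12\|X(\beta-\beta^* )\|_2^2+(Y-X\beta^* )^tX(\beta-\beta^* )\big)$. The prior $\Pi$ on $\mathbb R^p$: draw $s$ from a probability $\pi_p$ on $\{0,\dots,p\}$, then $S$ uniformly among subsets of size $s$, then $\beta_i$, $i\in S$, i.i.d. with Laplace density $x\mapsto\frac\lambda2e^{-\lambda|x|}$, and $\beta_i=0$ for $i\notin S$. *)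

(* Defs.v *)
From HB Require Import structures.
From mathcomp Require Import all_boot all_order all_algebra.
From mathcomp Require Import all_classical all_reals all_analysis.
Set Implicit Arguments. Unset Strict Implicit. Unset Printing Implicit Defensive.
Import Order.TTheory GRing.Theory Num.Theory.
Import numFieldNormedType.Exports.
Local Open Scope ring_scope.

Section Defs.
Variable R : realType.

Definition colnorm (n p : nat) (X : 'M[R]_(n, p)) : R :=
  \big[Num.max/0]_(i < p) Num.sqrt (\sum_(j < n) X j i ^+ 2).

Definition norm2sq (m : nat) (v : 'cV[R]_m) : R := \sum_(j < m) v j 0 ^+ 2.

Definition l1norm (m : nat) (v : 'cV[R]_m) : R := \sum_(j < m) `|v j 0|.

Definition supp (m : nat) (v : 'cV[R]_m) : {set 'I_m} := [set i | v i 0 != 0].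
Definition ssize (m : nat) (v : 'cV[R]_m) : nat := #|supp v|.

Definition Lambda (n p : nat) (X : 'M[R]_(n, p)) (Y : 'cV[R]_n)
    (bstar beta : 'cV[R]_p) : R :=
  expR (- (norm2sq (X *m (beta - bstar))) / 2
        + ((Y - X *m bstar)^T *m (X *m (beta - bstar))) 0 0).

Definition upd (p : nat) (beta : 'cV[R]_p) (i : 'I_p) (x : R) : 'cV[R]_p :=
  \col_j (if j == i then x else beta j 0).

Definition laplace_dens (lam x : R) : R := lam / 2 * expR (- (lam * `|x|)).

Definition laplace_int (lam : R) (f : R -> \bar R) : \bar R :=
  (\int[@lebesgue_measure R]_(x in [set: R]) ((laplace_dens lam x)%:E * f x))%E.

(* integral of a nonnegative f against the law of beta, where beta_i, i in s,
   are i.i.d. Laplace(lam) and the other coordinates equal those of beta0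
   (iterated integration, one coordinate of s at a time; by Tonelli this is the
   integral against the product measure for nonnegative measurable f). *)
Fixpoint slab_int (p : nat) (lam : R) (s : seq 'I_p)
    (f : 'cV[R]_p -> \bar R) (beta0 : 'cV[R]_p) : \bar R :=
  match s with
  | [::] => f beta0
  | i :: s' => laplace_int lam (fun x => slab_int lam s' f (upd beta0 i x))
  end.

(* integral of a nonnegative f against the prior Pi: s ~ pi_p, S uniform among
   subsets of size s, beta_i (i in S) iid Laplace(lam), beta_i = 0 otherwise *)
Definition prior_int (p : nat) (lam : R) (pi : nat -> R)
    (f : 'cV[R]_p -> \bar R) : \bar R :=
  (\sum_(s < p.+1)
     (pi s / ('C(p, s))%:R)%:E *
       \sum_(S : {set 'I_p} | #|S| == s) slab_int lam (enum S) f 0)%E.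

End Defs.

(* Main.v *)
Require Import Defs.
From HB Require Import structures.
From mathcomp Require Import all_boot all_order all_algebra.
From mathcomp Require Import all_classical all_reals all_analysis.
From mathcomp Require Import measurable_realfun lra ring.
Import Order.TTheory GRing.Theory Num.Theory.
Import numFieldNormedType.Exports.
Local Open Scope ring_scope.
Section S.
Variable R : realType.
Local Notation mu := (@lebesgue_measure R).

Lemma dpow (K u c x : R) (k : nat) :
  is_derive x 1 (fun y : R => K * (u - (y - c)) ^+ k.+1)
    (- (K * k.+1%:R * (u - (x - c)) ^+ k)).
Proof.
have -> : (fun y : R => K * (u - (y - c)) ^+ k.+1) =
   (K *: (cst u - (id - cst c)) ^+ k.+1)%R.
  by apply/funext => y; rewrite scalrfctE exprfctE.
have h1 := @is_derive_cst R R R u x 1.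
have h2 := @is_derive_id R R x 1.
have h3 := @is_derive_cst R R R c x 1.
have h4 := is_deriveB h2 h3.
have h5 := is_deriveB h1 h4.
have h6 := is_deriveX k.+1 h5.
have h7 := is_deriveZ K h6.
apply: is_derive_eq h7 _.
by rewrite /= sub0r subr0 !fctE /= /GRing.scale /= mulrN1 mulrN mulrA.

Qed.

Lemma ftc_pow (K u c : R) (k : nat) : 0 < u ->
  (\int[mu]_(x in `[c, (c + u)%R]) (K * (u - (x - c)) ^+ k)%R%:E =
   (K * u ^+ k.+1 / k.+1%:R)%R%:E)%E.
Proof.
move=> u0.
pose F := fun y : R => (- (K / k.+1%:R)) * (u - (y - c)) ^+ k.+1 : R.
have dF (x : R) : is_derive x (1:R) F (K * (u - (x - c)) ^+ k).
  apply: is_derive_eq (dpow _ _ _ _ _) _.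
  rewrite mulNr mulNr opprK divfK //.
have cF : continuous F.
  move=> x; apply/differentiable_continuous/derivable1_diffP.
  exact: (@ex_derive _ _ _ _ _ _ _ (dF x)).
rewrite (@continuous_FTC2 _ _ F); last 4 first.
- by rewrite ltrDl.
- apply: continuous_subspaceT => x.
  apply: cvgM; first exact: cvg_cst.
  apply: (@continuous_comp _ _ _ (fun x => u - (x - c)) (fun y => y ^+ k)).
    apply: cvgB; first exact: cvg_cst.
    apply: cvgB; [exact: cvg_id | exact: cvg_cst].
  exact: exprn_continuous.
- split.
  + move=> x _; exact: (@ex_derive _ _ _ _ _ _ _ (dF x)).
  + exact/cvg_at_right_filter/cF.
  + exact/cvg_at_left_filter/cF.
- by move=> x _; rewrite derive1E (@derive_val _ _ _ _ _ _ _ (dF x)).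
rewrite /F -EFinB; congr (EFin _).
rewrite addrAC subrr add0r subrr subr0 expr0n /= mulr0 sub0r mulNr opprK.
by rewrite mulrAC.
Qed.
Definition phi (K a c u : R) (k : nat) (x : R) : R :=
  K * expR (a * (x - c)) * (u - `|x - c|) ^+ k.

Lemma cont_lin (a c : R) : continuous (fun x : R => a * (x - c)).
Proof.
move=> x; apply: cvgM; first exact: cvg_cst.
apply: cvgB; [exact: cvg_id | exact: cvg_cst].
Qed.

Lemma cont_phi K a c u k : continuous (phi K a c u k).
Proof.
move=> x; apply: cvgM; first apply: cvgM; first exact: cvg_cst.
- apply: (@continuous_comp _ _ _ (fun x => a * (x - c)) expR); first exact: cont_lin.
  exact: continuous_expR.
- apply: (@continuous_comp _ _ _ (fun x => u - `|x - c|) (fun y => y ^+ k)).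
    apply: cvgB; first exact: cvg_cst.
    apply: (@continuous_comp _ _ _ (fun x => x - c) (fun y => `|y|)).
      apply: cvgB; [exact: cvg_id | exact: cvg_cst].
    exact: norm_continuous.
  exact: exprn_continuous.
Qed.

Lemma meas_phi K a c u k D : measurable_fun D (phi K a c u k).
Proof. apply: measurable_funTS; exact: continuous_measurable_fun (cont_phi _ _ _ _ _). Qed.

Lemma phi_ge0 K a c u k x : 0 <= K -> `|x - c| <= u -> 0 <= phi K a c u k x.
Proof.
move=> K0 h; rewrite /phi; apply: mulr_ge0; first by apply: mulr_ge0 => //; exact: expR_ge0.
by apply: exprn_ge0; rewrite subr_ge0.
Qed.

Lemma cosh_ge (t : R) : 2 <= expR t + expR (- t).
Proof. have := expR_ge1Dx t; have := expR_ge1Dx (- t); lra. Qed.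

Lemma oneD (K a c u : R) (k : nat) : 0 <= K -> 0 < u ->
  ((K * (2 * u ^+ k.+1 / k.+1%:R))%:E <=
   \int[mu]_(x in `[(c - u)%R, (c + u)%R]) (phi K a c u k x)%:E)%E.
Proof.
move=> K0 u0.
have mphi (D : set R) b : measurable_fun D (EFin \o phi K b c u k).
  by apply/measurable_EFinP; exact: meas_phi.
rewrite (@itv_bndbnd_setU _ _ (BLeft (c - u)) (BLeft c) (BRight (c + u))); last 2 first.
- by rewrite bnd_simp; lra.
- by rewrite bnd_simp; lra.
rewrite ge0_integral_setU //=; last 3 first.
- exact: mphi.
- move=> x [|] /=; rewrite in_itv /= => /andP[h1 h2]; rewrite lee_fin phi_ge0 //;
    rewrite ler_norml; lra.
- rewrite disj_set2E; apply/eqP/seteqP; split => x //=.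
  by rewrite !in_itv /= => -[/andP[_ h1] /andP[h2 _]]; lra.
rewrite integral_itv_bndo_bndc; last exact: mphi.
have sub : (\int[mu]_(x in `[(c - u)%R, c]) (phi K a c u k x)%:E =
    \int[mu]_(x in `[c, (c + u)%R]) (phi K (- a) c u k x)%:E)%E.
  have dF : (fun x : R => 2 * c - x)^`()%classic = cst (-1).
    apply/funext => z; rewrite derive1E.
    have h1 := @is_derive_cst R R R (2 * c) z 1.
    have h2 := @is_derive_id R R z 1.
    have h3 := is_deriveB h1 h2.
    rewrite (_ : (fun x : R => 2 * c - x) = (cst (2 * c) - id)%R); last by apply/funext.
    by rewrite (@derive_val _ _ _ _ _ _ _ h3) sub0r.
  have cF : continuous (fun x : R => 2 * c - x).
    by move=> x; apply: cvgB; [exact: cvg_cst | exact: cvg_id].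
  have := @integration_by_substitution_decreasing R (fun x => 2 * c - x) (phi K a c u k) c (c + u).
  rewrite (_ : 2 * c - (c + u) = c - u); last by lra.
  rewrite (_ : 2 * c - c = c); last by lra.
  move=> ->.
  - apply: eq_integral => x _; congr (EFin _).
    rewrite dF /= /phi opprK mulr1; congr (_ * expR _ * (_ - _) ^+ _).
    + by lra.
    + by rewrite (_ : 2 * c - x - c = - (x - c)) ?normrN //; lra.
  - by lra.
  - by move=> x y _ _ xy; lra.
  - by rewrite dF => x _; exact: cvg_cst.
  - by rewrite dF; exact: is_cvg_cst.
  - by rewrite dF; exact: is_cvg_cst.
  - split.
    + move=> x _; have h1 := @is_derive_cst R R R (2 * c) x 1.
      have h2 := @is_derive_id R R x 1.
      have h3 := is_deriveB h1 h2.
      rewrite (_ : (fun x : R => 2 * c - x) = (cst (2 * c) - id)%R); last by apply/funext.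
      exact: (@ex_derive _ _ _ _ _ _ _ h3).
    + exact/cvg_at_right_filter/cF.
    + exact/cvg_at_left_filter/cF.
  - exact/continuous_subspaceT/cont_phi.
rewrite sub -ge0_integralD //; last 4 first.
- move=> x; rewrite /= in_itv /= => /andP[h1 h2]; rewrite lee_fin phi_ge0 //;
    rewrite ler_norml; lra.
- exact: mphi.
- move=> x; rewrite /= in_itv /= => /andP[h1 h2]; rewrite lee_fin phi_ge0 //;
    rewrite ler_norml; lra.
- exact: mphi.
rewrite (_ : K * (2 * u ^+ k.+1 / k.+1%:R) = (2 * K) * u ^+ k.+1 / k.+1%:R); last first.
  by rewrite !mulrA [K * 2]mulrC.
rewrite -(@ftc_pow (2 * K) u c k) //.
apply: ge0_le_integral => //.
- move=> x; rewrite /= in_itv /= => /andP[h1 h2]; rewrite lee_fin.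
  by apply: mulr_ge0; [lra | apply: exprn_ge0; lra].
- apply/measurable_EFinP; apply: measurable_funTS; apply: continuous_measurable_fun.
  move=> x; apply: cvgM; first exact: cvg_cst.
  apply: (@continuous_comp _ _ _ (fun x => u - (x - c)) (fun y => y ^+ k)).
    apply: cvgB; first exact: cvg_cst.
    apply: cvgB; [exact: cvg_id | exact: cvg_cst].
  exact: exprn_continuous.
- by apply: emeasurable_funD; exact: mphi.
- move=> x; rewrite /= in_itv /= => /andP[h1 h2]; rewrite -EFinD lee_fin /phi.
  have -> : `|x - c| = x - c by rewrite ger0_norm //; lra.
  set w := (u - (x - c)) ^+ k.
  have w0 : 0 <= w by apply: exprn_ge0; lra.
  have := cosh_ge (a * (x - c)); rewrite mulNr.
  move=> hc.
  rewrite -mulrDl -mulrDr [2 * K]mulrC.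
  by apply: ler_wpM2r => //; apply: ler_wpM2l => //; lra.
Qed.
Lemma le_integral_nm (f1 f2 : R -> \bar R) : (forall x, (0 <= f1 x)%E) -> (forall x, (f1 x <= f2 x)%E) ->
  (\int[mu]_(x in [set: R]) f1 x <= \int[mu]_(x in [set: R]) f2 x)%E.
Proof.
Local Open Scope ereal_scope.
move=> f10 f12.
have f20 x : 0 <= f2 x by apply: le_trans (f12 x).
rewrite /integral !patch_setT.
have E1 : f1^\- = cst 0 by apply/funext => x; apply: (ge0_funenegE (D:=setT)) => //; rewrite inE.
have E2 : f2^\- = cst 0 by apply/funext => x; apply: (ge0_funenegE (D:=setT)) => //; rewrite inE.
have P1 : f1^\+ = f1 by apply/funext => x; apply: (ge0_funeposE (D:=setT)) => //; rewrite inE.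
have P2 : f2^\+ = f2 by apply/funext => x; apply: (ge0_funeposE (D:=setT)) => //; rewrite inE.
rewrite E1 E2 P1 P2; apply: leeB => //.
apply: le_ereal_sup => _ [h hf <-]; exists h => //= x; exact: le_trans (f12 x).
Qed.
End S.
Arguments phi {R}.
Arguments phi_ge0 {R}.
Arguments oneD {R}.
Arguments le_integral_nm {R}.
Arguments ftc_pow {R}.

Section M.
Variable R : realType.
Local Notation mu := (@lebesgue_measure R).

Lemma dens_ge0 (lam x : R) : 0 <= lam -> 0 <= laplace_dens lam x.
Proof.
move=> l0; rewrite /laplace_dens; apply: mulr_ge0; last exact: expR_ge0.
by apply: divr_ge0.
Qed.

Lemma slab_ge0 p (lam : R) (L : seq 'I_p) f b : 0 <= lam ->
  (forall y, (0 <= f y)%E) -> (0 <= slab_int lam L f b)%E.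
Proof.
move=> l0 f0; elim: L b => [|i L IH] b /=; first exact: f0.
rewrite /laplace_int; apply: integral_ge0 => x _.
by apply: mule_ge0; [rewrite lee_fin dens_ge0 | exact: IH].
Qed.

Lemma slab_lb p (lam : R) (bstar : 'cV[R]_p) (a : 'I_p -> R) (L : seq 'I_p) :
  0 < lam -> uniq L ->
  forall (f : 'cV[R]_p -> \bar R) (b0 : 'cV[R]_p) (M u : R),
  0 <= M -> 0 <= u -> (forall y, (0 <= f y)%E) ->
  (forall y : 'cV[R]_p, (forall j, j \notin L -> y j 0 = b0 j 0) ->
      \sum_(i <- L) `|y i 0 - bstar i 0| <= u ->
      ((M * expR (\sum_(i <- L) a i * (y i 0 - bstar i 0)))%:E <= f y)%E) ->
  ((M * (\prod_(i <- L) (lam / 2 * expR (- (lam * `|bstar i 0|))))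
     * expR (- (lam * u)) * ((2 * u) ^+ size L / (size L)`!%:R))%:E
     <= slab_int lam L f b0)%E.
Proof.
move=> lam0; elim: L => [|i L IH] /=.
  move=> _ f b0 M u M0 u0 f0 H.
  apply: le_trans _ (H b0 (fun _ _ => erefl) _); last by rewrite big_nil.
  rewrite !big_nil expR0 expr0 fact0 divr1 !mulr1 lee_fin.
  rewrite -[leRHS]mulr1; apply: ler_wpM2l => //.
  by rewrite expR_le1 oppr_le0; apply: mulr_ge0 => //; exact: ltW.
move=> /andP[iL uL] f b0 M u M0 u0 f0 H.
set c := bstar i 0; set k := size L.
set P' := \prod_(j <- L) (lam / 2 * expR (- (lam * `|bstar j 0|))).
have P'0 : 0 <= P'.
  rewrite /P'; apply: prodr_ge0 => j _; apply: mulr_ge0; last exact: expR_ge0.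
  by apply: divr_ge0 => //; exact: ltW.
set K := M * P' * (lam / 2 * expR (- (lam * `|c|))) * expR (- (lam * u))
           * (2 ^+ k / k`!%:R).
have K0 : 0 <= K.
  rewrite /K; repeat apply: mulr_ge0 => //;
    first [exact: (ltW lam0) | exact: expR_ge0 | (apply: divr_ge0 => //; exact: ltW) | exact: exprn_ge0 | by rewrite invr_ge0].
pose g x := if `|x - c| <= u then phi K (a i) c u k x else 0.
have g0 x : (0 <= (g x)%:E)%E.
  rewrite /g lee_fin; case: ifP => // hx; exact: phi_ge0.
have gle x : ((g x)%:E <= (laplace_dens lam x)%:E * slab_int lam L f (upd b0 i x))%E.
  rewrite /g; case: ifP => hx; last first.
    by apply: mule_ge0; [rewrite lee_fin dens_ge0 // ltW | exact: slab_ge0 (ltW lam0) f0].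
  have hu' : 0 <= u - `|x - c| by rewrite subr_ge0.
  have IHx := IH uL f (upd b0 i x) (M * expR (a i * (x - c))) (u - `|x - c|)
    (mulr_ge0 M0 (expR_ge0 _)) hu' f0.
  have Hy : forall y : 'cV_p, (forall j, j \notin L -> y j 0 = upd b0 i x j 0) ->
      \sum_(j <- L) `|y j 0 - bstar j 0| <= u - `|x - c| ->
      (((M * expR (a i * (x - c))) * expR (\sum_(j <- L) a j * (y j 0 - bstar j 0)))%:E
        <= f y)%E.
    move=> y hy hs.
    have yi : y i 0 = x by rewrite hy // /upd mxE eqxx.
    have h1 : forall j, j \notin i :: L -> y j 0 = b0 j 0.
      move=> j; rewrite in_cons negb_or => /andP[ji jL].
      by rewrite hy // /upd mxE (negbTE ji).
    have h2 : \sum_(j <- i :: L) `|y j 0 - bstar j 0| <= u.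
      by rewrite big_cons yi -/c; lra.
    by have := H y h1 h2; rewrite big_cons yi -/c expRD mulrA.
  have {IHx}IHx := IHx Hy.
  have d0 : (0 <= (laplace_dens lam x)%:E)%E by rewrite lee_fin dens_ge0 // ltW.
  apply: le_trans _ (lee_wpmul2l d0 IHx).
  rewrite -EFinM lee_fin /phi /laplace_dens.
  set t := `|x - c|.
  have e1 : expR (- (lam * (u - t))) = expR (- (lam * u)) * expR (lam * t).
    by rewrite -expRD; congr expR; ring.
  rewrite e1 exprMn.
  set Q := M * P' * (lam / 2) * expR (- (lam * u)) * (2 ^+ k / k`!%:R)
             * expR (a i * (x - c)) * (u - t) ^+ k.
  have Q0 : 0 <= Q.
    rewrite /Q; repeat apply: mulr_ge0 => //;
      first [exact: (ltW lam0) | exact: expR_ge0 | (apply: divr_ge0 => //; exact: ltW) | (apply: exprn_ge0; rewrite subr_ge0 //) | exact: exprn_ge0 | by rewrite invr_ge0].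
  have -> : K * expR (a i * (x - c)) * (u - t) ^+ k = Q * expR (- (lam * `|c|)).
    by rewrite /K /Q; ring.
  have -> : lam / 2 * expR (- (lam * `|x|)) *
      (M * expR (a i * (x - c)) * P' * (expR (- (lam * u)) * expR (lam * t)) *
       (2 ^+ k * (u - t) ^+ k / k`!%:R)) =
      Q * (expR (- (lam * `|x|)) * expR (lam * t)).
    by rewrite /Q; ring.
  apply: ler_wpM2l => //; rewrite -expRD ler_expR.
  have : `|x| <= `|c| + t by rewrite /t -[x in `|x|](subrK c) addrC ler_normD.
  by nra.
rewrite /laplace_int.
move: (le_integral_nm _ _ g0 gle) => hI; apply: (le_trans _ hI).
have [u0'|upos] := eqVneq u 0.
  rewrite u0' (_ : (2 * 0) ^+ k.+1 = 0 :> R); last by rewrite mulr0 expr0n.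
  by rewrite mul0r mulr0; apply: integral_ge0.
have upos' : 0 < u by rewrite lt_def upos u0.
have -> : (\int[mu]_x (g x)%:E =
    \int[mu]_(x in `[(c - u)%R, (c + u)%R]) (phi K (a i) c u k x)%:E)%E.
  rewrite [RHS]integral_mkcond; apply: eq_integral => x _.
  rewrite /g /patch.
  rewrite (_ : (x \in _) = (`|x - c| <= u)); last first.
    apply/idP/idP => [/set_mem /=|h]; first by rewrite in_itv /= ler_distl.
    by apply: mem_set => /=; rewrite in_itv /= -ler_distl.
  by case: ifP.
apply: le_trans _ (oneD K (a i) c u k K0 upos').
rewrite lee_fin le_eqVlt; apply/orP; left; apply/eqP.
rewrite big_cons /K factS natrM exprS exprMn /=.
rewrite -/P' -/c [u ^+ k.+1]exprS invfM; ring.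
Qed.
End M.
Arguments slab_lb {R p lam bstar a L}.
Arguments slab_ge0 {R p lam L}.
Arguments dens_ge0 {R}.
Section N.
Variable R : realType.

Lemma wcs (m : nat) (w y : 'I_m -> R) : (forall i, 0 <= w i) ->
  (\sum_i w i * y i) ^+ 2 <= (\sum_i w i) * (\sum_i w i * y i ^+ 2).
Proof.
move=> w0.
have E1 : (\sum_i w i * y i) ^+ 2 = \sum_i \sum_k (w i * y i) * (w k * y k).
  by rewrite expr2 mulr_suml; apply: eq_bigr => i _; rewrite mulr_sumr.
have E2 : (\sum_i w i) * (\sum_i w i * y i ^+ 2) =
    \sum_i \sum_k w i * (w k * y k ^+ 2).
  by rewrite mulr_suml; apply: eq_bigr => i _; rewrite mulr_sumr.
have E3 : (\sum_i w i) * (\sum_i w i * y i ^+ 2) =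
    \sum_i \sum_k w i * w k * y i ^+ 2.
  rewrite E2 exchange_big /=; apply: eq_bigr => i _; apply: eq_bigr => k _.
  by ring.
have H : 2 * (\sum_i \sum_k (w i * y i) * (w k * y k)) <=
   \sum_i \sum_k w i * (w k * y k ^+ 2) + \sum_i \sum_k w i * w k * y i ^+ 2.
  rewrite mulr_sumr -big_split /=; apply: ler_sum => i _.
  rewrite mulr_sumr -big_split /=; apply: ler_sum => k _.
  have := sqr_ge0 (y i - y k); have := mulr_ge0 (w0 i) (w0 k).
  nra.
rewrite E1; rewrite -E2 -E3 in H; lra.
Qed.

Lemma norm_bound (n p : nat) (X : 'M[R]_(n, p)) (d : 'cV[R]_p) :
  norm2sq (X *m d) <= colnorm X ^+ 2 * (\sum_i `|d i 0|) ^+ 2.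
Proof.
set c := colnorm X; set W := \sum_i `|d i 0|.
have W0 : 0 <= W by apply: sumr_ge0 => i _.
have c0 : 0 <= c.
  rewrite /c /colnorm; elim/big_rec: _ => // i x _ hx.
  by rewrite le_max hx orbT.
have col i : \sum_j X j i ^+ 2 <= c ^+ 2.
  have s0 : 0 <= \sum_j X j i ^+ 2 by apply: sumr_ge0 => j _; exact: sqr_ge0.
  have h : Num.sqrt (\sum_j X j i ^+ 2) <= c.
    by rewrite /c /colnorm; exact: (le_bigmax 0 (fun i => Num.sqrt (\sum_j X j i ^+ 2)) i).
  rewrite -(sqr_sqrtr s0).
  have := sqrtr_ge0 (\sum_j X j i ^+ 2); nra.
rewrite /norm2sq.
apply: (@le_trans _ _ (\sum_j W * \sum_i `|d i 0| * `|X j i| ^+ 2)).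
  apply: ler_sum => j _.
  apply: (@le_trans _ _ ((\sum_i `|d i 0| * `|X j i|) ^+ 2)); last first.
    exact: wcs.
  rewrite mxE.
  have h : `|\sum_i X j i * d i 0| <= \sum_i `|d i 0| * `|X j i|.
    apply: le_trans (ler_norm_sum _ _ _) _; apply: ler_sum => i _.
    by rewrite normrM mulrC.
  rewrite -[(\sum_i X j i * d i 0) ^+ 2]real_normK ?num_real //.
  have := normr_ge0 (\sum_i X j i * d i 0); nra.
rewrite -mulr_sumr exchange_big /=.
have H2 : \sum_i \sum_j `|d i 0| * `|X j i| ^+ 2 <= c ^+ 2 * W.
  rewrite /W mulr_sumr; apply: ler_sum => i _.
  rewrite -mulr_sumr mulrC; apply: ler_wpM2r => //.
  under eq_bigr do rewrite real_normK ?num_real //.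
  exact: col.
apply: le_trans (ler_wpM2l W0 H2) _.
have -> : W * (c ^+ 2 * W) = c ^+ 2 * W ^+ 2 by ring.
by [].
Qed.

Lemma ffact_le (m k : nat) : (m ^_ k <= m ^ k)%N.
Proof.
elim: k m => [|k IH] m; first by rewrite ffactn0 expn0.
rewrite ffactnS expnS leq_mul2l; apply/orP; right.
apply: leq_trans (IH m.-1) _.
by elim: k {IH} => // k IHk; rewrite !expnS leq_mul // leq_pred.
Qed.

End N.
Arguments norm_bound {R n p}.

Theorem lemma2 (R : realType) :
  exists P0 : nat, forall p : nat, (P0 <= p)%N ->
  forall (n : nat) (X : 'M[R]_(n, p)) (lam : R) (pi : nat -> R)
         (bstar : 'cV[R]_p) (Y : 'cV[R]_n),
    0 < lam ->
    colnorm X / p%:R <= lam ->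
    lam <= 4 * colnorm X * Num.sqrt (ln p%:R) ->
    (forall s : nat, (s <= p)%N -> 0 <= pi s) ->
    \sum_(s < p.+1) pi s = 1 ->
    ((pi (ssize bstar) / p%:R ^+ (2 * ssize bstar)
        * expR (- (lam * l1norm bstar)) * expR (-1))%:E
     <= prior_int lam pi (fun beta => (Lambda X Y bstar beta)%:E))%E.
Proof.
exists 2%N => p p2 n X lam pi bstar Y lam0 hl1 hl2 pi0 pisum.
set c := colnorm X.
set S := supp bstar.
have sE : ssize bstar = #|S| by [].
rewrite sE.
set s := #|S|.
pose a := fun i : 'I_p => ((Y - X *m bstar)^T *m X) 0 i.
have q2 : 2 <= p%:R :> R by rewrite (ler_nat R 2 p).
have q0 : 0 < p%:R :> R by lra.
set q := p%:R : R.
set rho := (lam * q)^-1.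
have rho0 : 0 < rho by rewrite invr_gt0 mulr_gt0.
have lrho : lam * rho = q^-1.
  by rewrite /rho invfM mulrA divff ?mul1r // gt_eqF.
have c0 : 0 <= c.
  rewrite /c /colnorm; elim/big_rec: _ => // i x _ hx.
  by rewrite le_max hx orbT.
have crho : c * rho <= 1.
  have -> : c * rho = (c / q) / lam by rewrite /rho invfM; ring.
  by rewrite ler_pdivrMr // mul1r.
set M := expR (- (c ^+ 2 * rho ^+ 2 / 2)).
pose f := fun beta => (Lambda X Y bstar beta)%:E.
have f0 : forall y, (0 <= f y)%E by move=> y; rewrite lee_fin expR_ge0.
have sumS (F : 'I_p -> R) : (forall i, i \notin S -> F i = 0) ->
    \sum_i F i = \sum_(i <- enum S) F i.
  move=> hF; rewrite big_enum /= [RHS]big_mkcond; apply: eq_bigr => i _.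
  by case: ifPn => // /hF ->.
have Hf : forall y : 'cV_p, (forall j, j \notin enum S -> y j 0 = (0 : 'cV[R]_p) j 0) ->
   \sum_(i <- enum S) `|y i 0 - bstar i 0| <= rho ->
   ((M * expR (\sum_(i <- enum S) a i * (y i 0 - bstar i 0)))%:E <= f y)%E.
  move=> y hy hs.
  set d := y - bstar.
  have dE i : d i 0 = y i 0 - bstar i 0 by rewrite !mxE.
  have doff i : i \notin S -> d i 0 = 0.
    move=> hi; rewrite dE hy ?mem_enum // mxE.
    have -> : bstar i 0 = 0 by move: hi; rewrite inE negbK => /eqP.
    by rewrite subr0.
  have lin : ((Y - X *m bstar)^T *m (X *m d)) 0 0 =
      \sum_(i <- enum S) a i * (y i 0 - bstar i 0).
    rewrite mulmxA mxE (sumS (fun i => a i * d i 0)).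
      by apply: eq_bigr => i _; rewrite dE.
    by move=> i hi; rewrite doff // mulr0.
  have nb := norm_bound X d.
  have l1 : \sum_i `|d i 0| = \sum_(i <- enum S) `|y i 0 - bstar i 0|.
    rewrite (sumS (fun i => `|d i 0|)).
      by apply: eq_bigr => i _; rewrite dE.
    by move=> i hi; rewrite doff // normr0.
  rewrite /f /Lambda lee_fin /M -expRD ler_expR -lin.
  have W0 : 0 <= \sum_i `|d i 0| by apply: sumr_ge0 => i _.
  have W2 : (\sum_i `|d i 0|) ^+ 2 <= rho ^+ 2.
    rewrite l1 in W0 *; nra.
  have := ler_wpM2l (exprn_ge0 2 c0) W2.
  rewrite -/c in nb; lra.
have key := @slab_lb R p lam bstar a (enum S) lam0 (enum_uniq S) f 0 M rho
   (expR_ge0 _) (ltW rho0) f0 Hf.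
have hs : (s < p.+1)%N.
  by rewrite ltnS; apply: leq_trans (max_card _) _; rewrite card_ord.
have Cpos : 0 < ('C(p, s))%:R :> R by rewrite ltr0n bin_gt0 -ltnS.
have pis : 0 <= pi s / ('C(p, s))%:R by apply: divr_ge0; [exact: pi0 | exact: ltW].
have prior : ((pi s / ('C(p, s))%:R)%:E * slab_int lam (enum S) f 0 <=
    prior_int lam pi f)%E.
  rewrite /prior_int (bigD1 (Ordinal hs)) //=.
  rewrite -[X in (X <= _)%E]adde0; apply: leeD.
    apply: lee_wpmul2l; first by rewrite lee_fin.
    rewrite (bigD1 S) //= -[X in (X <= _)%E]adde0; apply: leeD => //.
    by apply: sume_ge0 => S' _; exact: slab_ge0 (ltW lam0) f0.
  apply: sume_ge0 => t _; apply: mule_ge0.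
    rewrite lee_fin; apply: divr_ge0 => //; apply: pi0.
    by rewrite -ltnS.
  by apply: sume_ge0 => S' _; exact: slab_ge0 (ltW lam0) f0.
apply: le_trans _ prior.
apply: le_trans _ (lee_wpmul2l _ key); last by rewrite lee_fin.
rewrite -EFinM lee_fin.
rewrite -cardE -/s.
have PE : \prod_(i <- enum S) (lam / 2 * expR (- (lam * `|bstar i 0|))) =
    (lam / 2) ^+ s * expR (- (lam * l1norm bstar)).
  rewrite big_split /= big_enum /= prodr_const -/s big_enum /= -expR_sum.
  congr (_ * expR _).
  rewrite /l1norm (sumS (fun i => `|bstar i 0|)); last first.
    by move=> i; rewrite inE negbK => /eqP ->; rewrite normr0.
  by rewrite big_enum /= mulr_sumr -sumrN.
rewrite PE.
set E := expR (- (lam * l1norm bstar)).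
have LR : (lam / 2) ^+ s * (2 * rho) ^+ s = q^-1 ^+ s.
  by rewrite -exprMn -lrho -mulrA mulKf // pnatr_eq0.
set C := ('C(p, s))%:R : R.
set F := (s`!)%:R : R.
have -> : pi s / q ^+ (2 * s) * E * expR (-1) =
    (pi s * E) * (expR (-1) * (q ^+ (2 * s))^-1) by ring.
have -> : pi s / C * (M * ((lam / 2) ^+ s * E) * expR (- (lam * rho)) *
      ((2 * rho) ^+ s / F)) =
    (pi s * E) * ((M * expR (- (lam * rho))) *
      (((lam / 2) ^+ s * (2 * rho) ^+ s) * (C^-1 * F^-1))) by ring.
rewrite LR.
have A0 : 0 <= pi s * E by apply: mulr_ge0; [apply: pi0; rewrite -ltnS | exact: expR_ge0].
apply: ler_wpM2l => //.
apply: ler_pM.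
- exact: expR_ge0.
- by rewrite invr_ge0 exprn_ge0 // ltW.
- rewrite /M -expRD ler_expR lrho.
  have h1 : (c * rho) ^+ 2 <= 1.
    have : 0 <= c * rho by apply: mulr_ge0 => //; exact: ltW.
    nra.
  have h2 : q^-1 <= 2^-1 by rewrite lef_pV2 ?posrE //; lra.
  rewrite -exprMn; lra.
- have Bq : C * F <= q ^+ s.
    by rewrite /C /F /q -natrM -natrX ler_nat bin_ffact ffact_le.
  have Q0 : 0 < q ^+ s by rewrite exprn_gt0.
  have CF0 : 0 < C * F by rewrite mulr_gt0 // /F ltr0n fact_gt0.
  rewrite exprVn mul2n -addnn exprD [(q ^+ s * q ^+ s)^-1]invfM -[C^-1 / F]invfM.
  apply: ler_wpM2l; first by rewrite invr_ge0 ltW.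
  by rewrite lef_pV2 ?posrE.
Qed.
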